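(* Let $n_0\ge1$ and $n_1=2n_0$. For $\ell\in\{0,1\}$ let $\mathbf{h}^\ell_k\in\mathbb{R}^{n_\ell}$, $k=0,\dots,n_\ell-1$, have entries $(\mathbf{h}^\ell_k)_j=\cos\frac{2(j+\frac12)k\pi}{n_\ell}+\sin\frac{2(j+\frac12)k\pi}{n_\ell}$. Let $\mathbf{P}\in\mathbb{R}^{n_1\times n_0}$ with $\mathbf{P}_{2j,j}=\mathbf{P}_{2j+1,j}=1$ ($j=0,\dots,n_0-1$) and all other entries $0$, let $\mathbf{R}=\mathbf{P}^\top$, and let $\mathbf{S}_1\in\mathbb{R}^{n_1\times n_1}$ be the periodic second-order Shapiro filter, $(\mathbf{S}_1\mathbf{x})_j=\frac14(x_{j-1}+2x_j+x_{j+1})$ with indices taken modulo $n_1$. Set $\bar{\mathbf{P}}:=\mathbf{S}_1\mathbf{P}$, $\bar{\mathbf{R}}:=\mathbf{R}\mathbf{S}_1$ and $c_k:=\cos(k\pi/n_1)$. Then for all $k=0,\dots,n_0-1$: $\bar{\mathbf{P}}\mathbf{h}^0_k=c_k^3\mathbf{h}^1_k-c_{n_0+k}^3\mathbf{h}^1_{n_0+k}$, $\bar{\mathbf{R}}\mathbf{h}^1_k=2c_k^3\mathbf{h}^0_k$, and $\bar{\mathbf{R}}\mathbf{h}^1_{n_0+k}=-2c_{n_0+k}^3\mathbf{h}^0_k$.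
   Context: Indices start at $0$. *)

(* Defs.v *)
From HB Require Import structures.
From mathcomp Require Import all_boot all_order all_algebra.
From mathcomp Require Import all_classical all_reals all_analysis.
Set Implicit Arguments. Unset Strict Implicit. Unset Printing Implicit Defensive.
Import Order.TTheory GRing.Theory Num.Theory.
Local Open Scope ring_scope.

Definition hvec (R : realType) (n k : nat) : 'cV[R]_n :=
  \col_(j < n) (cos (2 * (j%:R + 2^-1) * k%:R * pi / n%:R)
              + sin (2 * (j%:R + 2^-1) * k%:R * pi / n%:R)).

Definition Pmat (R : realType) (n0 : nat) : 'M[R]_(n0.*2, n0) :=
  \matrix_(i < n0.*2, j < n0) (if (i./2 == nat_of_ord j)%N then 1 else 0).

Definition Rmat (R : realType) (n0 : nat) : 'M[R]_(n0, n0.*2) := (Pmat R n0)^T.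

Definition Shapiro (R : realType) (n : nat) : 'M[R]_n :=
  \matrix_(i < n, j < n)
    ((if (nat_of_ord j == (i + 1) %% n)%N then 4^-1 else 0)
     + (if (nat_of_ord j == nat_of_ord i)%N then 2^-1 else 0)
     + (if ((j + 1) %% n == nat_of_ord i)%N then 4^-1 else 0)).

Definition ck (R : realType) (n1 k : nat) : R := cos (k%:R * pi / n1%:R).

(* Main.v *)
Require Import Defs.
From HB Require Import structures.
From mathcomp Require Import all_boot all_order all_algebra.
From mathcomp Require Import all_classical all_reals all_analysis.
From mathcomp Require Import ring lra zify.
Import Order.TTheory GRing.Theory Num.Theory.
Local Open Scope ring_scope.

Lemma half_eq (i j : nat) : (i./2 == j)%N = (i == j.*2)%N || (i == j.*2.+1)%N.
Proof. apply/eqP/orP; lia. Qed.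

Lemma prev_eq (N i j : nat) : (i < N)%N -> (j < N)%N ->
  ((j + 1) %% N == i)%N = (j == (if i == 0 then N.-1 else i.-1))%N.
Proof.
move=> hi hj; case: (ltnP (j+1) N) => h.
  rewrite modn_small //; case: ifP => /eqP; lia.
have -> : (j + 1 = N)%N by lia.
rewrite modnn; case: ifP => /eqP; lia.
Qed.

Lemma next_eq (N i : nat) : (i < N)%N ->
  ((i + 1) %% N = if i.+1 == N then 0 else i.+1)%N.
Proof.
move=> hi; case: ifP => /eqP h.
  by rewrite addn1 h modnn.
by rewrite modn_small addn1 //; lia.
Qed.

Set Implicit Arguments. Unset Strict Implicit.
Section S.
Variable R : realType.

Definition cas (y : R) := cos y + sin y.

Lemma cas2pi (n : nat) (y : R) : cas (y + n%:R * (pi *+ 2)) = cas y.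
Proof.
elim: n => [|n IH]; first by rewrite mul0r addr0.
by rewrite -natr1 mulrDl mul1r addrA /cas cosD2pi sinD2pi.
Qed.

Lemma casD (y z : R) : cas (y + z) = cos y * cas z + sin y * (cos z - sin z).
Proof. rewrite /cas cosD sinD; ring. Qed.

Lemma casDpi (y : R) : cas (y + pi) = - cas y.
Proof. by rewrite /cas cosDpi sinDpi opprD. Qed.

Lemma cos3 (t : R) : cos (t *+ 3) = 4 * cos t ^+ 3 - 3 * cos t.
Proof.
rewrite mulrSr cosD sin_mulr2n cos_mulr2n.
transitivity ((cos t ^+2 *+2 -1) * cos t - (cos t * sin t ^+ 2) *+ 2); first ring.
rewrite sin2cos2; ring.
Qed.

Lemma sin3 (t : R) : sin (t *+ 3) = 3 * sin t - 4 * sin t ^+ 3.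
Proof.
rewrite mulrSr sinD sin_mulr2n cos_mulr2n.
transitivity ((cos t ^+2 *+2 -1) * sin t + (cos t ^+ 2 * sin t) *+ 2); first ring.
rewrite cos2sin2; ring.
Qed.

Lemma sum_delta (N : nat) (P : 'I_N -> bool) (a : nat) (ha : (a < N)%N) (c : R) (F : nat -> R) :
  (forall j : 'I_N, P j = (nat_of_ord j == a)) ->
  \sum_(j < N) ((if P j then c else 0) * F j) = c * F a.
Proof.
move=> hP; rewrite (bigD1 (Ordinal ha)) //= hP eqxx.
rewrite big1 ?addr0 // => j hj; rewrite hP ifN ?mul0r //; apply: contra hj => /eqP e.
Qed.

Lemma Smul (N : nat) (x : 'cV[R]_N) (F : nat -> R) (i : 'I_N) :
  (forall j : 'I_N, x j 0 = F j) ->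
  (Shapiro R N *m x) i 0 = 4^-1 * F (if i.+1 == N then 0 else i.+1)%N
     + 2^-1 * F i + 4^-1 * F (if (i : nat) == 0 then N.-1 else i.-1)%N.
Proof.
move=> hx; rewrite mxE.
under eq_bigr => j _ do rewrite mxE hx !mulrDl.
have hi := ltn_ord i.
rewrite !big_split /=; congr (_ + _ + _).
- rewrite (@sum_delta _ _ ((i+1) %% N)) ?next_eq //.
  case: ifP => /eqP; lia.
- by rewrite (@sum_delta _ _ i).
- rewrite (@sum_delta _ _ (if (i : nat) == 0 then N.-1 else i.-1)%N) //.
    case: ifP => _; lia.
  by move=> j; rewrite prev_eq.
Qed.

Lemma Pmul (n0 : nat) (x : 'cV[R]_n0) (F : nat -> R) (i : 'I_n0.*2) :
  (forall j : 'I_n0, x j 0 = F j) -> (Pmat R n0 *m x) i 0 = F i./2.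
Proof.
move=> hx; rewrite mxE.
under eq_bigr => j _ do rewrite mxE hx.
rewrite (@sum_delta _ _ i./2) ?mul1r //; first by rewrite ltn_half_double.
Qed.

Lemma Rmul (n0 : nat) (x : 'cV[R]_n0.*2) (F : nat -> R) (i : 'I_n0) :
  (forall j : 'I_n0.*2, x j 0 = F j) -> (Rmat R n0 *m x) i 0 = F i.*2 + F i.*2.+1.
Proof.
move=> hx; rewrite mxE.
have hi := ltn_ord i.
under eq_bigr => j _ do rewrite !mxE hx half_eq.
transitivity (\sum_(j < n0.*2) ((if nat_of_ord j == i.*2 then 1 else 0) * F j
   + (if nat_of_ord j == i.*2.+1 then 1 else 0) * F j)).
  apply: eq_bigr => j _; case: eqP => [->|]; case: eqP => //=; try lia;
    rewrite ?mul0r ?addr0 ?add0r //.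
rewrite big_split /= (@sum_delta _ _ i.*2) ?(@sum_delta _ _ i.*2.+1) ?mul1r //; lia.
Qed.


Lemma cas_shift (A B : R) (n : nat) : A = B + n%:R * (pi *+ 2) -> cas A = cas B.
Proof. by move=> ->; rewrite cas2pi. Qed.

Lemma cas_expand (x z : R) : cas (x + z) = cos x * (cos z + sin z) + sin x * (cos z - sin z).
Proof. exact: casD. Qed.

Lemma L1even (t x : R) : 4^-1 * cas (x + t) + 2^-1 * cas (x + t) + 4^-1 * cas (x + - t *+ 3)
  = cos t ^+ 3 * cas x - cos (t + pi / 2) ^+ 3 * cas (x + pi / 2).
Proof.
rewrite !cas_expand cosDpihalf cos_pihalf sin_pihalf mulNrn !cosN !sinN cos3 sin3 /cas; by field.
Qed.

Lemma L1odd (t x : R) : 4^-1 * cas (x + t *+ 3) + 2^-1 * cas (x + - t) + 4^-1 * cas (x + - t)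
  = cos t ^+ 3 * cas x - cos (t + pi / 2) ^+ 3 * cas (x + - (pi / 2)).
Proof.
rewrite !cas_expand cosDpihalf !cosN !sinN cos_pihalf sin_pihalf cos3 sin3 /cas; by field.
Qed.

Lemma L2 (w y : R) :
  4^-1 * cas (y + w) + 2^-1 * cas (y + - w) + 4^-1 * cas (y + - w *+ 3)
  + (4^-1 * cas (y + w *+ 3) + 2^-1 * cas (y + w) + 4^-1 * cas (y + - w))
  = 2 * cos w ^+ 3 * cas y.
Proof.
rewrite !cas_expand mulNrn !cosN !sinN cos3 sin3 /cas; by field.
Qed.

End S.

Lemma cas_shiftN (R : realType) (A B : R) (n : nat) : A + n%:R * (pi *+ 2) = B -> cas A = cas B.
Proof. by move=> <-; rewrite cas2pi. Qed.

Ltac argtac := repeat match goal with x := _ |- _ => subst x end;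
  match goal with hpi : pi = _ |- _ => rewrite hpi end;
  rewrite -?addnn !(natrM, natrD) ?mulrS ?mulr0n; field.

Unset Implicit Arguments.

Theorem mainTheorem11 (R : realType) (n0 : nat) (hn0 : (1 <= n0)%N) :
  forall k : nat, (k < n0)%N ->
    [/\ (Shapiro R n0.*2 *m Pmat R n0) *m hvec R n0 k
          = (ck R n0.*2 k) ^+ 3 *: hvec R n0.*2 k
            - (ck R n0.*2 (n0 + k)) ^+ 3 *: hvec R n0.*2 (n0 + k),
        (Rmat R n0 *m Shapiro R n0.*2) *m hvec R n0.*2 k
          = (2 * (ck R n0.*2 k) ^+ 3) *: hvec R n0 k
      & (Rmat R n0 *m Shapiro R n0.*2) *m hvec R n0.*2 (n0 + k)
          = (- 2 * (ck R n0.*2 (n0 + k)) ^+ 3) *: hvec R n0 k].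
Proof.
move=> k hk.
have n0P : (n0%:R : R) != 0 by rewrite pnatr_eq0 -lt0n.
pose T : R := pi / (n0.*2)%:R.
have N2 : ((n0.*2)%:R : R) = 2 * n0%:R by rewrite -muln2 natrM mulrC.
have hpi : pi = 2 * n0%:R * T by rewrite /T N2; field.
clearbody T.
have h0E K (j : nat) : cos (2 * (j%:R + 2^-1) * K%:R * pi / n0%:R) + sin (2 * (j%:R + 2^-1) * K%:R * pi / n0%:R) = cas ((4 * j + 2)%:R * (K%:R * T)).
  rewrite /cas hpi; congr (cos _ + sin _); by rewrite natrD natrM; field.
have h1E K (j : nat) : cos (2 * (j%:R + 2^-1) * K%:R * pi / (n0.*2)%:R) + sin (2 * (j%:R + 2^-1) * K%:R * pi / (n0.*2)%:R) = cas ((2 * j + 1)%:R * (K%:R * T)).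
  rewrite /cas hpi; congr (cos _ + sin _); by rewrite N2 natrD natrM; field.
have ckE K : ck R n0.*2 K = cos (K%:R * T).
  by rewrite /ck hpi; congr cos; rewrite N2; field.
have pi2 : pi / 2 = n0%:R * T by rewrite hpi; field.
have ckE' : ck R n0.*2 (n0 + k) = cos (k%:R * T + pi / 2).
  by rewrite ckE pi2 natrD mulrDl addrC.
clear N2.
case: n0 hn0 hk n0P hpi h0E h1E ckE ckE' pi2 => // n _ hk n0P hpi h0E h1E ckE ckE' pi2.
have P23 K (j : 'I_n.+1) : ((Rmat R n.+1 *m Shapiro R n.+1.*2) *m hvec R n.+1.*2 K) j 0
    = 2 * cos (K%:R * T) ^+ 3 * cas ((4 * j + 2)%:R * (K%:R * T)).
  pose F1 := fun i : nat => cas ((2 * i + 1)%:R * (K%:R * T)).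
  rewrite -mulmxA (Rmul (F := fun i : nat => 4^-1 * F1 (if i.+1 == n.+1.*2 then 0 else i.+1)%N
     + 2^-1 * F1 i + 4^-1 * F1 (if i == 0 then n.+1.*2.-1 else i.-1)%N)); last first.
    by move=> i; rewrite (Smul (F := F1)) // => l; rewrite mxE h1E.
  case: j => j hj /=.
  have -> : (j.*2.+1 == n.+1.*2) = false by apply/negbTE/eqP; lia.
  set w := K%:R * T.
  set y := (4 * j + 2)%:R * w.
  have e1 : F1 j.*2.+1 = cas (y + w) by apply: (@cas_shift _ _ _ 0); rewrite /F1; argtac.
  have e2 : F1 j.*2 = cas (y + - w) by apply: (@cas_shift _ _ _ 0); rewrite /F1; argtac.
  have e3 : F1 (if j.*2 == 0 then n.*2.+1 else j.*2.-1)%N = cas (y + - w *+ 3).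
    case: j hj {e1 e2} @y => [|j] hj y /=.
      by apply: (@cas_shift _ _ _ K); rewrite /F1; argtac.
    by apply: (@cas_shift _ _ _ 0); rewrite /F1; argtac.
  have e4 : F1 (if j.*2.+2 == n.+1.*2 then 0 else j.*2.+2)%N = cas (y + w *+ 3).
    case: (eqVneq j n) => [ejn|hjn].
      have -> : (j.*2.+2 == n.+1.*2) = true by apply/eqP; lia.
      by apply: (@cas_shiftN _ _ _ K); rewrite /F1; subst j; argtac.
    have -> : (j.*2.+2 == n.+1.*2) = false by apply/negbTE/eqP; lia.
    by apply: (@cas_shift _ _ _ 0); rewrite /F1; argtac.
  rewrite e1 e2 e3 e4; exact: L2.
split.
- apply/matrixP => i j; rewrite ord1 {j}.
  rewrite -mulmxA (Smul (F := fun l => cas ((4 * l./2 + 2)%:R * (k%:R * T)))); last first.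
    by move=> l; rewrite (Pmul (F := fun l => cas ((4 * l + 2)%:R * (k%:R * T)))) // => j; rewrite mxE h0E.
  rewrite !mxE h1E h1E ckE' ckE.
  case: i => i hi /=.
  have [m [-> | ->]] : exists m, i = m.*2 \/ i = m.*2.+1 by exists i./2; lia.
  + have -> : (m.*2.+1 == n.+1.*2) = false by apply/negbTE/eqP; lia.
    have -> : (m.*2.+1)./2 = m by lia.
    have -> : (m.*2)./2 = m by lia.
    case: m hi => [|m] hi.
    * have -> : (n.+1.*2.-1)./2 = n by lia.
      set t := k%:R * T.
      set x := (2 * 0.*2 + 1)%:R * t.
      rewrite (@cas_shift _ ((4 * 0 + 2)%:R * t) (x + t) 0); last by argtac.
      rewrite (@cas_shift _ ((4 * n + 2)%:R * t) (x + - t *+ 3) k); last by argtac.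
      rewrite (@cas_shift _ ((2 * 0.*2 + 1)%:R * ((n.+1 + k)%:R * T)) (x + pi / 2) 0); last by argtac.
      exact: L1even.
    * have -> : (m.+1.*2 == 0%N) = false by apply/negbTE/eqP; lia.
      have -> : (m.+1.*2.-1)./2 = m by lia.
      set t := k%:R * T.
      set x := (2 * m.+1.*2 + 1)%:R * t.
      rewrite (@cas_shift _ ((4 * m.+1 + 2)%:R * t) (x + t) 0); last by argtac.
      rewrite (@cas_shift _ ((4 * m + 2)%:R * t) (x + - t *+ 3) 0); last by argtac.
      rewrite (@cas_shift _ ((2 * m.+1.*2 + 1)%:R * ((n.+1 + k)%:R * T)) (x + pi / 2) m.+1); last by argtac.
      exact: L1even.
  + have -> : (m.*2.+1 == 0%N) = false by apply/negbTE/eqP; lia.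
    have -> : (m.*2.+1.-1)./2 = m by lia.
    have -> : (m.*2.+1)./2 = m by lia.
    set t := k%:R * T.
    set x := (2 * m.*2.+1 + 1)%:R * t.
    rewrite (@cas_shift _ ((4 * m + 2)%:R * t) (x + - t) 0); last by argtac.
    rewrite (@cas_shift _ ((2 * m.*2.+1 + 1)%:R * ((n.+1 + k)%:R * T)) (x + - (pi / 2)) m.+1); last by argtac.
    case: (eqVneq m n) => [emn|hmn].
    * have -> : (m.*2.+2 == n.+1.*2) = true by apply/eqP; lia.
      have -> : (0%N)./2 = 0%N by [].
      rewrite (@cas_shiftN _ ((4 * 0 + 2)%:R * t) (x + t *+ 3) k); last by subst m; argtac.
      exact: L1odd.
    * have -> : (m.*2.+2 == n.+1.*2) = false by apply/negbTE/eqP; lia.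
      have -> : (m.*2.+2)./2 = m.+1 by lia.
      rewrite (@cas_shift _ ((4 * m.+1 + 2)%:R * t) (x + t *+ 3) 0); last by argtac.
      exact: L1odd.
- apply/matrixP => j l; rewrite ord1 {l} P23 !mxE h0E ckE; by rewrite mulrA.
- apply/matrixP => j l; rewrite ord1 {l} P23 !mxE h0E ckE.
  rewrite (@cas_shift _ ((4 * j + 2)%:R * ((n.+1 + k)%:R * T)) ((4 * j + 2)%:R * (k%:R * T) + pi) j); last by argtac.
  rewrite casDpi; ring.
Qed.
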